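(* Let $n$ and $0<n_1<\cdots<n_d<n$ be integers with $m_1=n_1$, $m_k=n_k-n_{k-1}$ ($2\le k\le d$), $m_{d+1}=n-n_d$, and regard $\mathrm{Flag}(n_1,\dots,n_d;n)=\{(VJ_1V^{\mathsf T},\dots,VJ_dV^{\mathsf T}):V\in\mathrm{O}(n)\}$ as a submanifold of $(\mathbb{R}^{n\times n})^d$ with the Frobenius inner product. Let $V(t)$ be a differentiable curve in $\mathrm{O}(n)$ with $\Lambda(t)=V(t)^{\mathsf T}\dot V(t)$ satisfying $\Lambda(k,k)\equiv0$ ($k=1,\dots,d+1$), $c(t)=V(t)(J_1,\dots,J_d)V(t)^{\mathsf T}$, and let $X(t)\in\mathfrak{so}(n)$ be differentiable with $X(k,k)\equiv0$ ($k=1,\dots,d+1$). Let \[ T_2(t)=V(t)\big(\Lambda XJ_1+J_1X\Lambda,\dots,\Lambda XJ_d+J_dX\Lambda\big)V(t)^{\mathsf T}. \] Then the orthogonal projection of $T_2(t)$ onto $\mathbb{T}_{c(t)}\mathrm{Flag}(n_1,\dots,n_d;n)$ equals $V(t)(W_1(t),\dots,W_d(t))V(t)^{\mathsf T}$, where $W_1,\dots,W_d$ are symmetric with blocks \[ W_k(p,q)=\begin{cases}\sum_{s=1}^{d+1}X(k,s)\Lambda(s,q)-\sum_{s=1}^{d+1}\Lambda(s,k)^{\mathsf T}X(q,s)^{\mathsf T}, & p=k,\ q\neq k,\\[2pt] \sum_{s=1}^{d+1}\Lambda(s,p)^{\mathsf T}X(k,s)^{\mathsf T}-\sum_{s=1}^{d+1}X(p,s)\Lambda(s,k),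 & q=k,\ p\neq k,\\[2pt] 0, & \text{otherwise}.\end{cases} \]
   Context: $J_k=\operatorname{diag}(-I_{m_1},\dots,-I_{m_{k-1}},I_{m_k},-I_{m_{k+1}},\dots,-I_{m_{d+1}})$. $V(X_1,\dots,X_d)V^{\mathsf T}$ denotes $(VX_1V^{\mathsf T},\dots,VX_dV^{\mathsf T})$. For an $n\times n$ matrix $M$, $M(p,q)$ denotes its $(p,q)$ block in the partition $n=m_1+\cdots+m_{d+1}$. *)

(* Defs.v *)
From HB Require Import structures.
From mathcomp Require Import all_boot all_order all_algebra.
From mathcomp Require Import all_classical all_reals all_analysis.
Set Implicit Arguments. Unset Strict Implicit. Unset Printing Implicit Defensive.
Import Order.TTheory GRing.Theory Num.Theory.
Import numFieldNormedType.Exports.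
Local Open Scope classical_set_scope.
Local Open Scope ring_scope.

Section FlagDefs.
Variables (R : realType) (n d : nat) (ns : 'I_d -> nat).

(* 0-based block index of i : 'I_n in the partition n = m_1 + ... + m_{d+1}
   given by 0 < n_1 < ... < n_d < n  (ns j = n_{j+1}):
   blk i = k  iff  n_k <= i < n_{k+1}  (n_0 := 0, n_{d+1} := n). *)
Definition blk (i : 'I_n) : nat := (\sum_(j < d) (ns j <= i))%N.

Definition restr (M : 'M[R]_n) (p q : nat) : 'M[R]_n :=
  \matrix_(i, j) (if (blk i == p) && (blk j == q) then M i j else 0).

(* J_{k+1} = diag(-I, .., -I, I_{m_{k+1}}, -I, .., -I), for k : 'I_d. *)
Definition Jk (k : 'I_d) : 'M[R]_n :=
  \matrix_(i, j) (if i == j then (if blk i == k then 1 else -1) else 0).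

Definition orthogonal_mx (U : 'M[R]_n) : Prop := U^T *m U = 1%:M.

Definition inFlag (Z : 'I_d -> 'M[R]_n) : Prop :=
  exists U : 'M[R]_n, orthogonal_mx U /\ forall k, Z k = U *m Jk k *m U^T.

Definition tangentFlag (c : 'I_d -> 'M[R]_n) : set ('I_d -> 'M[R]_n) :=
  [set Y | exists g : 'I_d -> R -> 'M[R]_n,
     [/\ forall t, inFlag (fun k => g k t),
         forall k, g k 0 = c k,
         forall k t, derivable (g k) t 1 &
         forall k, Y k = 'D_1 (g k) 0]].

Definition frob (A B : 'I_d -> 'M[R]_n) : R := \sum_(k < d) \tr ((A k)^T *m B k).

Definition is_orth_proj (S : set ('I_d -> 'M[R]_n)) (T P : 'I_d -> 'M[R]_n) : Prop :=
  S P /\ forall Y, S Y -> frob (fun k => T k - P k) Y = 0.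

(* The matrices W_k of the statement (k : 'I_d stands for W_{k+1}). *)
Definition Wk (X L : 'M[R]_n) (k : 'I_d) : 'M[R]_n :=
  \matrix_(i, j)
   (let p := blk i in let q := blk j in
    if (p == k) && (q != k) then
      (\sum_(s < d.+1) (restr X k s *m restr L s q)
       - \sum_(s < d.+1) ((restr L s k)^T *m (restr X q s)^T)) i j
    else if (q == k) && (p != k) then
      (\sum_(s < d.+1) ((restr L s p)^T *m (restr X k s)^T)
       - \sum_(s < d.+1) (restr X p s *m restr L s k)) i j
    else 0).

End FlagDefs.

(* Main.v *)
Require Import Defs.
From HB Require Import structures.
From mathcomp Require Import all_boot all_order all_algebra.
From mathcomp Require Import all_classical all_reals all_analysis.
From mathcomp Require Import fingroup perm ring lra.
Import Order.TTheory GRing.Theory Num.Theory.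
Import numFieldNormedType.Exports.
Local Open Scope classical_set_scope.
Local Open Scope ring_scope.

Section An.
Variable R : realType.

Lemma der_sum (I : Type) (r : seq I) (P : pred I) (F : I -> R -> R) t :
  (forall i, derivable (F i) t 1) -> derivable (fun s => \sum_(i <- r | P i) F i s) t 1.
Proof.
move=> dF; elim: r => [|a r IH].
  have -> : (fun s => \sum_(i <- [::] | P i) F i s) = cst 0.
    by apply/funext => s; rewrite big_nil.
  exact: derivable_cst.
case: (boolP (P a)) => Pa.
  have -> : (fun s => \sum_(i <- a :: r | P i) F i s) =
     F a + (fun s => \sum_(i <- r | P i) F i s).
    by apply/funext => s; rewrite big_cons Pa.
  exact: derivableD.
have -> : (fun s => \sum_(i <- a :: r | P i) F i s) =
     (fun s => \sum_(i <- r | P i) F i s).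
  by apply/funext => s; rewrite big_cons (negbTE Pa).
exact: IH.
Qed.

Lemma der_prod (I : Type) (r : seq I) (P : pred I) (F : I -> R -> R) t :
  (forall i, derivable (F i) t 1) -> derivable (fun s => \prod_(i <- r | P i) F i s) t 1.
Proof.
move=> dF; elim: r => [|a r IH].
  have -> : (fun s => \prod_(i <- [::] | P i) F i s) = cst 1.
    by apply/funext => s; rewrite big_nil.
  exact: derivable_cst.
case: (boolP (P a)) => Pa.
  have -> : (fun s => \prod_(i <- a :: r | P i) F i s) =
     F a * (fun s => \prod_(i <- r | P i) F i s).
    by apply/funext => s; rewrite big_cons Pa.
  exact: derivableM.
have -> : (fun s => \prod_(i <- a :: r | P i) F i s) =
     (fun s => \prod_(i <- r | P i) F i s).
  by apply/funext => s; rewrite big_cons (negbTE Pa).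
exact: IH.
Qed.

Lemma der_sumD (I : Type) (r : seq I) (F : I -> R -> R) t :
  (forall i, derivable (F i) t 1) ->
  'D_1 (fun s => \sum_(i <- r) F i s) t = \sum_(i <- r) 'D_1 (F i) t.
Proof.
move=> dF; elim: r => [|a r IH].
  have -> : (fun s => \sum_(i <- [::]) F i s) = cst 0.
    by apply/funext => s; rewrite big_nil.
  by rewrite derive_cst big_nil.
have -> : (fun s => \sum_(i <- a :: r) F i s) =
     F a + (fun s => \sum_(i <- r) F i s).
  by apply/funext => s; rewrite big_cons.
rewrite deriveD // ?IH ?big_cons //.
exact: der_sum.
Qed.

Lemma dmul m p q (F : R -> 'M[R]_(m, p)) (G : R -> 'M[R]_(p, q)) t :
  derivable F t 1 -> derivable G t 1 ->
  derivable (fun s => F s *m G s) t 1 /\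
  'D_1 (fun s => F s *m G s) t = 'D_1 F t *m G t + F t *m 'D_1 G t.
Proof.
move=> /derivable_mxP dF /derivable_mxP dG.
have dFG : derivable (fun s => F s *m G s) t 1.
  apply/derivable_mxP => i j.
  have -> : (fun s => (F s *m G s) i j) =
    (fun s => \sum_(k < p) (fun s => F s i k * G s k j) s).
    by apply/funext => s; rewrite mxE.
  apply: der_sum => k.
  exact: (derivableM (dF i k) (dG k j)).
split => //.
rewrite derive_mx // derive_mx; last by apply/derivable_mxP.
rewrite derive_mx; last by apply/derivable_mxP.
apply/matrixP => i j; rewrite !mxE.
have -> : (fun s => (F s *m G s) i j) =
    (fun s => \sum_(k <- index_enum 'I_p) (fun k s => F s i k * G s k j) k s).
  by apply/funext => s; rewrite mxE.
rewrite der_sumD; last by move=> k; exact: (derivableM (dF i k) (dG k j)).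
rewrite -big_split /=; apply: eq_bigr => k _; rewrite !mxE.
have -> : (fun s => F s i k * G s k j) = (fun s => F s i k) * (fun s => G s k j) by [].
rewrite deriveM // /GRing.scale /=.
by rewrite addrC [G t k j * _]mulrC.
Qed.

Lemma dtr m p (F : R -> 'M[R]_(m, p)) t :
  derivable F t 1 ->
  derivable (fun s => (F s)^T) t 1 /\ 'D_1 (fun s => (F s)^T) t = ('D_1 F t)^T.
Proof.
move=> dF; have dT : derivable (fun s => (F s)^T) t 1.
  apply/derivable_mxP => i j.
  have -> : (fun s => (F s)^T i j) = (fun s => F s j i).
    by apply/funext => s; rewrite mxE.
  by move/derivable_mxP: dF; apply.
split => //; rewrite derive_mx // derive_mx //.
apply/matrixP => i j; rewrite !mxE.
suff -> : (fun s => (F s)^T i j) = (fun s => F s j i) by [].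
by apply/funext => s; rewrite mxE.
Qed.


Lemma mdlin m p (C D : 'M[R]_(m, p)) (t : R) :
  derivable (fun s : R => C + s *: D) t 1 /\ 'D_1 (fun s : R => C + s *: D) t = D.
Proof.
have E : forall i j, (fun s : R => (C + s *: D) i j) = cst (C i j) + id * cst (D i j).
  by move=> i j; apply/funext => s; rewrite !mxE.
have dE : forall i j, derivable (fun s : R => (C + s *: D) i j) t 1.
  move=> i j; rewrite E; apply: derivableD; first exact: derivable_cst.
  apply: derivableM; [exact: derivable_id | exact: derivable_cst].
have dd : derivable (fun s : R => C + s *: D) t 1 by apply/derivable_mxP.
split => //; rewrite derive_mx //; apply/matrixP => i j; rewrite !mxE E.
rewrite deriveD; [|exact: derivable_cst|].
  rewrite deriveM; [|exact: derivable_id|exact: derivable_cst].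
  by rewrite !derive_cst derive_id scaler0 !add0r /cst /= /GRing.scale /= mulr1.
exact: (derivableM (@derivable_id _ _ t 1) (derivable_cst _ t 1)).
Qed.

Lemma dcstm m p (C : 'M[R]_(m, p)) (t : R) :
  derivable (fun _ : R => C) t 1 /\ 'D_1 (fun _ : R => C) t = 0.
Proof. split; [exact: derivable_cst | exact: derive_cst]. Qed.

Lemma ddet k (M : R -> 'M[R]_k) (t : R) :
  (forall i j, derivable (fun s => M s i j) t 1) -> derivable (fun s => \det (M s)) t 1.
Proof.
move=> dM.
have -> : (fun s => \det (M s)) = (fun s => \sum_(p <- index_enum {perm 'I_k})
   (fun (p : {perm 'I_k}) (s : R) => (-1) ^+ p * \prod_(i <- index_enum 'I_k) (fun i s => M s i (p i)) i s) p s).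
  by apply/funext => s; rewrite /determinant.
apply: der_sum => p.
apply: (derivableM (derivable_cst _ _ _)).
exact: der_prod.
Qed.

Lemma mdinv k (M : R -> 'M[R]_k) (t : R) :
  (forall s, M s \in unitmx) -> derivable M t 1 -> derivable (fun s => invmx (M s)) t 1.
Proof.
move=> uM /derivable_mxP dM; apply/derivable_mxP => i j.
have -> : (fun s => invmx (M s) i j) = (fun s => (\det (M s))^-1) *
   (cst ((-1) ^+ (j + i)) * (fun s => \det (row' j (col' i (M s))))).
  apply/funext => s; rewrite /invmx uM !mxE.
  by [].
apply: derivableM.
  apply: derivableV; last exact: ddet.
  by rewrite -unitfE -unitmxE.
apply: derivableM; first exact: derivable_cst.
apply: ddet => a b.
have -> : (fun s => row' j (col' i (M s)) a b) = (fun s => M s (lift j a) (lift i b)).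
  by apply/funext => s; rewrite !mxE.
exact: dM.
Qed.

Lemma skew_unit k (A : 'M[R]_k) : A^T = - A -> (1%:M - A) \in unitmx.
Proof.
move=> skA; rewrite -row_free_unit -kermx_eq0.
apply/eqP/row_matrixP => i; rewrite row0.
set v := row i (kermx (1%:M - A)).
have hv : v *m (1%:M - A) = 0 by rewrite -row_mul mulmx_ker row0.
have vA : v = v *m A.
  by apply/eqP; rewrite -subr_eq0 -[X in X - _]mulmx1 -mulmxBr hv.
set s := v *m A *m v^T.
have sT : s^T = - s.
  by rewrite /s !trmx_mul trmxK skA mulNmx mulmxN mulmxA.
have s0 : s 0 0 = 0.
  have : s^T 0 0 = (- s) 0 0 by rewrite sT.
  rewrite !mxE => e; move: e.
  by move/eqP; rewrite -addr_eq0 -mulr2n mulrn_eq0 /= => /eqP.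
have : (v *m v^T) 0 0 = 0 by rewrite [X in X *m _]vA.
rewrite mxE => /eqP; rewrite psumr_eq0 => [/allP H|j _]; last first.
  by rewrite !mxE -expr2 sqr_ge0.
apply/matrixP => a j; rewrite (ord1 a) [RHS]mxE.
have := H j (mem_index_enum _); rewrite !mxE /= -expr2 sqrf_eq0 => /eqP.
by [].
Qed.


Lemma cayley k (A : 'M[R]_k) : A^T = - A ->
  exists U : R -> 'M[R]_k, [/\ (forall s, (U s)^T *m U s = 1%:M), U 0 = 1%:M,
    (forall s, derivable U s 1) & 'D_1 U 0 = A].
Proof.
move=> skA; set B := 2^-1 *: A.
have skB : B^T = - B by rewrite /B linearZ /= skA scalerN.
have hB : B + B = A.
  by rewrite /B -scalerDl (_ : 2^-1 + 2^-1 = 1) ?scale1r //; field.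
clearbody B.
pose P := fun s : R => 1%:M + s *: (- B).
pose Q := fun s : R => 1%:M + s *: B.
have uP : forall s, P s \in unitmx.
  move=> s; rewrite /P scalerN; apply: skew_unit.
  by rewrite linearZ /= skB scalerN.
have uQ : forall s, Q s \in unitmx.
  move=> s; rewrite /Q -[s *: B]opprK -scalerN; apply: skew_unit.
  by rewrite linearZ /= linearN /= skB opprK scalerN opprK.
have PT : forall s, (P s)^T = Q s.
  by move=> s; rewrite /P /Q linearD /= trmx1 linearZ /= linearN /= skB opprK.
have PQ : forall s, P s *m Q s = Q s *m P s.
  move=> s; rewrite /P /Q !mulmxDl !mulmxDr !mul1mx !mulmx1.
  rewrite -!scalemxAl -!scalemxAr !mulNmx !mulmxN.
  by rewrite !addrA; congr (_ + _); rewrite addrAC.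
pose U := fun s => Q s *m invmx (P s).
have P0 : P 0 = 1%:M by rewrite /P scale0r addr0.
have U0 : U 0 = 1%:M by rewrite /U P0 invmx1 /Q scale0r addr0 mulmx1.
have dU : forall s, derivable U s 1.
  move=> s; have hh :=  (@dmul k k k Q (fun s => invmx (P s)) s
     (@mdlin k k 1%:M B s).1 (@mdinv k P s uP (@mdlin k k 1%:M (-B) s).1)).1. exact: hh.
exists U; split => //.
- move=> s; have QT : (Q s)^T = P s by rewrite -PT trmxK.
  rewrite /U trmx_mul trmx_inv PT QT !mulmxA -(mulmxA (invmx (Q s))) PQ.
  by rewrite mulmxA (mulVmx (uQ s)) mul1mx mulmxV.
- have E : (fun s => U s *m P s) = Q.
    by apply/funext => s; rewrite /U -mulmxA mulVmx // mulmx1.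
  have := (@dmul k k k U P 0 (dU 0) (@mdlin k k 1%:M (- B) 0).1).2.
  rewrite E (@mdlin k k 1%:M B 0).2 (@mdlin k k 1%:M (- B) 0).2 U0 P0 mulmx1 mul1mx => h.
  by apply/eqP; rewrite -hB -subr_eq -h.
Qed.

End An.

Section W.
Variables (R : realType) (n d : nat) (ns : 'I_d -> nat).

Lemma blk_le (i : 'I_n) : (blk ns i < d.+1)%N.
Proof.
rewrite ltnS /blk; apply: leq_trans (_ : (\sum_(j < d) 1 <= d)%N).
  by apply: leq_sum => j _; exact: leq_b1.
by rewrite sum1_card card_ord.
Qed.

Lemma sum_blk (F : 'I_n -> nat -> R) (m : 'I_n) :
  \sum_(s < d.+1) (if blk ns m == s then F m s else 0) = F m (blk ns m).
Proof.
rewrite (bigD1 (Ordinal (blk_le m))) //= eqxx big1 ?addr0 // => s.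
by rewrite -val_eqE /= eq_sym => /negbTE ->.
Qed.

Lemma sumXL (X L : 'M[R]_n) (p q : nat) i j :
  blk ns i = p -> blk ns j = q ->
  (\sum_(s < d.+1) (restr ns X p s *m restr ns L s q)) i j = (X *m L) i j.
Proof.
move=> hi hj; rewrite summxE mxE.
under eq_bigr do rewrite mxE.
rewrite exchange_big /=; apply: eq_bigr => m _.
rewrite -(sum_blk (fun m s => X i m * L m j)).
apply: eq_bigr => s _; rewrite !mxE hi hj !eqxx /=.
by case: (blk ns m == s) => //; rewrite mul0r.
Qed.

Lemma sumLX (X L : 'M[R]_n) (p q : nat) i j :
  blk ns i = p -> blk ns j = q ->
  (\sum_(s < d.+1) ((restr ns L s p)^T *m (restr ns X q s)^T)) i j = ((X *m L)^T) i j.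
Proof.
move=> hi hj; rewrite summxE !mxE.
under eq_bigr do rewrite mxE.
rewrite exchange_big /=; apply: eq_bigr => m _.
rewrite -(sum_blk (fun m s => X j m * L m i)).
apply: eq_bigr => s _; rewrite !mxE hi hj !eqxx /= andbT.
by case: (blk ns m == s) => //=; [rewrite mulrC | rewrite mul0r].
Qed.

Definition sgb (k : 'I_d) (i : 'I_n) : R := if blk ns i == k then 1 else -1.

Lemma Jk_diag k : Jk R n ns k = diag_mx (\row_i sgb k i).
Proof. by apply/matrixP => i j; rewrite !mxE /sgb; case: (i == j). Qed.

Lemma Wk_eq (X L : 'M[R]_n) k :
  let A := 2^-1 *: ((X *m L)^T - X *m L) in
  Wk ns X L k = A *m Jk R n ns k - Jk R n ns k *m A.
Proof.
move=> A; rewrite Jk_diag mul_mx_diag mul_diag_mx.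
apply/matrixP => i j; rewrite !mxE /sgb.
case: (boolP (blk ns i == k)) => /= hi; case: (boolP (blk ns j == k)) => /= hj.
- ring.
- rewrite mxE (sumXL _ _ _ _ _ _ (eqP hi) (erefl _)) !mxE.
  rewrite (sumLX _ _ _ _ _ _ (eqP hi) (erefl _)) ?mxE.
  set a := \sum_(j0 < n) X i j0 * L j0 j; set b := \sum_(j0 < n) X j j0 * L j0 i; by field.
- rewrite mxE (sumLX _ _ _ _ _ _ (erefl _) (eqP hj)) ?mxE.
  rewrite (sumXL _ _ _ _ _ _ (erefl _) (eqP hj)) ?mxE.
  set a := \sum_(j0 < n) X i j0 * L j0 j; set b := \sum_(j0 < n) X j j0 * L j0 i; by field.
- ring.
Qed.
End W.

Lemma dmulcl (R : realType) m p q (C : 'M[R]_(m, p)) (F : R -> 'M[R]_(p, q)) (t : R) :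
  derivable F t 1 ->
  derivable (fun s => C *m F s) t 1 /\ 'D_1 (fun s => C *m F s) t = C *m 'D_1 F t.
Proof.
move=> dF; have [h1 h2] := @dmul R m p q (fun _ => C) F t (dcstm R m p C t).1 dF.
by split => //; rewrite h2 (dcstm R m p C t).2 mul0mx add0r.
Qed.

Lemma dmulcr (R : realType) m p q (C : 'M[R]_(p, q)) (F : R -> 'M[R]_(m, p)) (t : R) :
  derivable F t 1 ->
  derivable (fun s => F s *m C) t 1 /\ 'D_1 (fun s => F s *m C) t = 'D_1 F t *m C.
Proof.
move=> dF; have [h1 h2] := @dmul R m p q F (fun _ => C) t dF (dcstm R p q C t).1.
by split => //; rewrite h2 (dcstm R p q C t).2 mulmx0 addr0.
Qed.

Lemma JkT (R : realType) n d (ns : 'I_d -> nat) k : (Jk R n ns k)^T = Jk R n ns k.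
Proof. by rewrite Jk_diag tr_diag_mx. Qed.

Lemma JkJk (R : realType) n d (ns : 'I_d -> nat) k : Jk R n ns k *m Jk R n ns k = 1%:M.
Proof.
rewrite {1}Jk_diag mul_diag_mx; apply/matrixP => i j; rewrite !mxE /sgb.
case: (i == j); case: (_ == _) => /=.
all: by rewrite ?mulr0 ?mulrNN ?mulr1.
Qed.

Lemma comm_lemma (R : realType) n (L X A J : 'M[R]_n) :
  J *m J = 1%:M -> A + A = L *m X - X *m L ->
  let G := L *m X *m J + J *m X *m L - (A *m J - J *m A) in G *m J = J *m G.
Proof.
move=> JJ hA G.
have JJr : forall M : 'M[R]_n, M *m J *m J = M by move=> M; rewrite -mulmxA JJ mulmx1.
have hA2 : J *m A *m J + J *m A *m J = J *m L *m X *m J - J *m X *m L *m J.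
  have := congr1 (fun M => J *m M *m J) hA.
  by rewrite /= !mulmxDr !mulmxDl mulmxN mulNmx !mulmxA.
rewrite /G mulmxBl mulmxDl mulmxBl !JJr mulmxBr mulmxDr mulmxBr !mulmxA JJ !mul1mx.
move: (L *m X) (X *m L) (J *m L *m X *m J) (J *m X *m L *m J) (J *m A *m J) hA hA2.
move=> p q r s u h1 h2; apply/matrixP => i j.
move/matrixP: h1 => /(_ i j); move/matrixP: h2 => /(_ i j); rewrite !mxE => h2 h1.
lra.
Qed.

Lemma trace_lemma (R : realType) n (M Z J : 'M[R]_n) :
  J *m J = 1%:M -> M *m J = J *m M -> Z *m J + J *m Z = 0 -> \tr (M *m Z) = 0.
Proof.
move=> JJ MJ ZJ.
have ZJ' : Z *m J = - (J *m Z) by apply/eqP; rewrite -addr_eq0 ZJ.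
have : \tr (M *m Z) = - \tr (M *m Z).
  rewrite -{1}(mulmx1 Z) -JJ !mulmxA -(mulmxA M Z J) ZJ' mulmxN mulNmx.
  rewrite raddfN /=; congr (- _).
  by rewrite mulmxA MJ mxtrace_mulC !mulmxA JJ mul1mx.
by move/eqP; rewrite -addr_eq0 -mulr2n mulrn_eq0 /= => /eqP.
Qed.

Arguments dmulcl {R m p q} C F t.
Arguments dmulcr {R m p q} C F t.
Arguments dmul {R m p q} F G t.
Arguments dtr {R m p} F t.

Theorem lemmaA1 (R : realType) (n d : nat) (ns : 'I_d -> nat)
  (ns_pos : forall i : 'I_d, (0 < ns i)%N)
  (ns_lt : forall i : 'I_d, (ns i < n)%N)
  (ns_incr : forall i j : 'I_d, (i < j)%N -> (ns i < ns j)%N)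
  (V X : R -> 'M[R]_n)
  (V_orth : forall t, orthogonal_mx (V t))
  (V_der : forall t, derivable V t 1)
  (L_diag : forall t (k : nat), (k <= d)%N ->
     restr ns ((V t)^T *m 'D_1 V t) k k = 0)
  (X_der : forall t, derivable X t 1)
  (X_skew : forall t, (X t)^T = - X t)
  (X_diag : forall t (k : nat), (k <= d)%N -> restr ns (X t) k k = 0) :
  forall t : R,
    let L := (V t)^T *m 'D_1 V t in
    let c := fun k : 'I_d => V t *m Jk R n ns k *m (V t)^T in
    let T2 := fun k : 'I_d =>
      V t *m (L *m X t *m Jk R n ns k + Jk R n ns k *m X t *m L) *m (V t)^T in
    (forall k : 'I_d, (Wk ns (X t) L k)^T = Wk ns (X t) L k) /\
    is_orth_proj (tangentFlag ns c) T2
      (fun k : 'I_d => V t *m Wk ns (X t) L k *m (V t)^T).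
Proof.
move=> t L c T2.
have VtV : (V t)^T *m V t = 1%:M := V_orth t.
have VVt : V t *m (V t)^T = 1%:M := mulmx1C VtV.
have Lsk : L^T = - L.
  have E : (fun s => (V s)^T *m V s) = (fun _ => 1%:M).
    by apply/funext => s; exact: V_orth.
  have [_ h] := dmul (fun s => (V s)^T) V t (dtr V t (V_der t)).1 (V_der t).
  move: h; rewrite E (dcstm R n n 1%:M t).2 (dtr V t (V_der t)).2 => /eqP.
  rewrite eq_sym addr_eq0 => /eqP h.
  by rewrite /L trmx_mul trmxK h.
set X0 := X t.
have Xsk : X0^T = - X0 := X_skew t.
set A := 2^-1 *: ((X0 *m L)^T - X0 *m L).
have WE : forall k, Wk ns X0 L k = A *m Jk R n ns k - Jk R n ns k *m A.
  by move=> k; rewrite Wk_eq.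
have Ask : A^T = - A.
  by rewrite /A linearZ /= linearB /= trmxK -scalerN opprB.
have WT : forall k : 'I_d, (Wk ns X0 L k)^T = Wk ns X0 L k.
  move=> k; rewrite WE linearB /= !trmx_mul JkT Ask mulmxN mulNmx opprK.
  by rewrite addrC.
split => //; split.
- have [U [Uo U0 dU DU]] := cayley R n A Ask.
  pose J := Jk R n ns.
  have D : forall k (s : R), derivable (fun s => V t *m U s *m J k *m (U s)^T *m (V t)^T) s 1 /\
      'D_1 (fun s => V t *m U s *m J k *m (U s)^T *m (V t)^T) s =
      V t *m 'D_1 U s *m J k *m (U s)^T *m (V t)^T + V t *m U s *m J k *m ('D_1 U s)^T *m (V t)^T.
    move=> k s.
    have h1 := dmulcl (V t) U s (dU s).
    have h2 := dmulcr (J k) (fun s => V t *m U s) s h1.1.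
    have h5 := dtr U s (dU s).
    have h3 := dmul (fun s => V t *m U s *m J k) (fun s => (U s)^T) s h2.1 h5.1.
    have h4 := dmulcr (V t)^T (fun s => V t *m U s *m J k *m (U s)^T) s h3.1.
    split; first exact: h4.1.
    by rewrite h4.2 h3.2 h2.2 h1.2 h5.2 mulmxDl.
  exists (fun k s => V t *m U s *m J k *m (U s)^T *m (V t)^T); split.
  + move=> s; exists (V t *m U s); split.
      rewrite /orthogonal_mx trmx_mul mulmxA -(mulmxA _ (V t)^T) VtV mulmx1.
      exact: Uo.
    by move=> k; rewrite trmx_mul !mulmxA.
  + by move=> k; rewrite U0 trmx1 !mulmx1.
  + by move=> k s; exact: (D k s).1.
  + move=> k; rewrite (D k 0).2 U0 DU trmx1 Ask WE !mulmx1 mulmxN mulNmx.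
    by rewrite mulmxBr mulmxBl !mulmxA.
- move=> Y [g [gF g0 gd gD]].
  rewrite /frob; apply: big1 => k _ /=.
  pose J := Jk R n ns k.
  have JJ : J *m J = 1%:M by exact: JkJk.
  set G := L *m X0 *m J + J *m X0 *m L - Wk ns X0 L k.
  have e1 : T2 k - V t *m Wk ns X0 L k *m (V t)^T = V t *m G *m (V t)^T.
    by rewrite /T2 /G mulmxBr mulmxBl.
  set Z := (V t)^T *m Y k *m V t.
  have eY : Y k = V t *m Z *m (V t)^T.
    by rewrite /Z !mulmxA VVt mul1mx -mulmxA VVt mulmx1.
  have gg : forall s, g k s *m g k s = 1%:M.
    move=> s; have [U [Uo hU]] := gF s; rewrite hU.
    have UUt := mulmx1C Uo.
    have -> : U *m Jk R n ns k *m U^T *m (U *m Jk R n ns k *m U^T) =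
      U *m J *m (U^T *m U) *m J *m U^T by rewrite !mulmxA.
    by rewrite Uo mulmx1 -(mulmxA U) JJ mulmx1 UUt.
  have E : (fun s => g k s *m g k s) = (fun _ => 1%:M) by apply/funext => s; exact: gg.
  have [_ h] := dmul (g k) (g k) 0 (gd k 0) (gd k 0).
  rewrite E (dcstm R n n 1%:M 0).2 -gD g0 in h.
  have ZJ : Z *m J + J *m Z = 0.
    have -> : Z *m J + J *m Z = (V t)^T *m (Y k *m c k + c k *m Y k) *m V t.
      rewrite /c /Z mulmxDr mulmxDl !mulmxA VtV mul1mx.
      by rewrite -(mulmxA _ (V t)^T (V t)) VtV mulmx1.
    by rewrite -h mulmx0 mul0mx.
  have GJ : G *m J = J *m G.
    rewrite /G WE; apply: comm_lemma => //.
    rewrite /A -scalerDl (_ : 2^-1 + 2^-1 = 1 :> R); last by field.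
    by rewrite scale1r trmx_mul Lsk Xsk mulmxN mulNmx opprK.
  have MJ : G^T *m J = J *m G^T.
    by rewrite -[J in LHS]JkT -trmx_mul -GJ trmx_mul JkT.
  rewrite e1 eY !trmx_mul trmxK !mulmxA -(mulmxA _ (V t)^T (V t)) VtV mulmx1.
  rewrite mxtrace_mulC !mulmxA VtV mul1mx.
  have -> : G^T *m (V t)^T *m Y k *m V t = G^T *m Z by rewrite /Z !mulmxA.
  exact: trace_lemma JJ MJ ZJ.
Qed.
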